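(* Let $K$ be a field of characteristic $0$, $e\ge 2$, $A,B\in M_e(K)$, $d\in(\mathbb{Z}/e\mathbb{Z})^\times$, and let $\mathcal{K}=[\delta_{i+1,j}]_{0\le i,j\le e-1}\in M_e(K)$ be the circulant matrix (indices modulo $e$). For $0\le l\le e-1$: (i) $\mathcal{K}^l(A\overset{d}{\ast}B)=A\overset{d}{\ast}(\mathcal{K}^lB)=(\mathcal{K}^{-d^{-1}l}A)\overset{d}{\ast}B$; (ii) $(A\overset{d}{\ast}B)\mathcal{K}^l=A\overset{d}{\ast}(B\mathcal{K}^l)=(A\mathcal{K}^{-d^{-1}l})\overset{d}{\ast}B$.
   Context: For $A=[a_{i,j}],B=[b_{i,j}]\in M_e(K)$ (indices modulo $e$) and $d\in(\mathbb{Z}/e\mathbb{Z})\setminus\{0\}$, the $d$-composition is $A\overset{d}{\ast}B=\big[\sum_{s=0}^{e-1}\sum_{t=0}^{e-1}a_{s,t}b_{ds+i,dt+j}\big]_{0\le i,j\le e-1}$. Here $\delta$ is Kronecker's delta, and $d^{-1}$ is the inverse of $d$ in $\mathbb{Z}/e\mathbb{Z}$. *)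

(* Defs.v *)
From HB Require Import structures.
From mathcomp Require Import all_boot all_order all_algebra.
Set Implicit Arguments. Unset Strict Implicit. Unset Printing Implicit Defensive.
Import GRing.Theory.
Local Open Scope ring_scope.

(* Matrices of size e = n.+2 (so e >= 2); indices 'I_(n.+2) are identified
   with Z/eZ = 'Z_(n.+2) (convertible types), so index arithmetic is mod e. *)

Definition dcomp (K : fieldType) (n : nat) (d : 'Z_(n.+2))
  (A B : 'M[K]_(n.+2)) : 'M[K]_(n.+2) :=
  \matrix_(i, j) \sum_(s < n.+2) \sum_(t < n.+2)
     A s t * B (d * (s : 'Z_(n.+2)) + (i : 'Z_(n.+2)))
               (d * (t : 'Z_(n.+2)) + (j : 'Z_(n.+2))).

Definition circK (K : fieldType) (n : nat) : 'M[K]_(n.+2) :=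
  \matrix_(i, j) (((j : 'Z_(n.+2)) == (i : 'Z_(n.+2)) + 1)%:R).

(* Main.v *)
Require Import Defs.
From HB Require Import structures.
From mathcomp Require Import all_boot all_order all_algebra.
Import GRing.Theory.
Local Open Scope ring_scope.

Section S.
Variables (K : fieldType) (n : nat).
Local Notation Z := 'Z_(n.+2).
Local Notation M := 'M[K]_(n.+2).

Lemma KmL (X : M) (i j : 'I_(n.+2)) :
  (circK K n * X) i j = X ((i : Z) + 1) j.
Proof.
rewrite -mulmxE mxE (bigD1 ((i : Z) + 1)) //= big1 ?addr0.
  by rewrite mxE eqxx mul1r.
move=> k /negbTE hk; by rewrite mxE hk mul0r.
Qed.

Lemma KmR (X : M) (i j : 'I_(n.+2)) :
  (X * circK K n) i j = X i ((j : Z) - 1).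
Proof.
rewrite -mulmxE mxE (bigD1 ((j : Z) - 1)) //= big1 ?addr0.
  by rewrite mxE subrK eqxx mulr1.
move=> k hk; rewrite mxE.
case: eqP => [e|]; last by rewrite mulr0.
by move: hk; rewrite e addrK eqxx.
Qed.
Lemma KmXL (k : nat) (X : M) (i j : 'I_(n.+2)) :
  (circK K n ^+ k * X) i j = X ((i : Z) + k%:R) j.
Proof.
elim: k i => [|k IH] i; first by rewrite expr0 mul1r addr0.
rewrite exprS -mulrA KmL IH; congr (X _ j); by rewrite -natr1 addrA [RHS]addrAC. Qed.

Lemma KmXR (k : nat) (X : M) (i j : 'I_(n.+2)) :
  (X * circK K n ^+ k) i j = X i ((j : Z) - k%:R).
Proof.
elim: k j => [|k IH] j; first by rewrite expr0 mulr1 subr0.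
rewrite exprSr mulrA KmR IH; congr (X i _); by rewrite -natr1 opprD addrA [RHS]addrAC. Qed.

Lemma Km_e : circK K n ^+ n.+2 = 1.
Proof.
apply/matrixP=> i j; rewrite -[_ ^+ _]mulr1 KmXL.
have -> : (n.+2)%:R = 0 :> Z by have := @val_Zp_nat n.+2 isT n.+2; rewrite modnn => h; apply: val_inj; exact: h.
by rewrite addr0.
Qed.

Lemma KmX_unit k : circK K n ^+ k \is a GRing.unit.
Proof.
apply: unitrX.
have h : circK K n * circK K n ^+ n.+1 = 1 by rewrite -exprS Km_e.
have := mulmx1_unit h.
case => h1 _. by [].
Qed.
Lemma KmVL (k : nat) (X : M) (i j : 'I_(n.+2)) :
  (circK K n ^- k * X) i j = X ((i : Z) - k%:R) j.
Proof.
rewrite -{2}[X](mulVKr (KmX_unit k)) KmXL subrK.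
by [].
Qed.

Lemma KmVR (k : nat) (X : M) (i j : 'I_(n.+2)) :
  (X * circK K n ^- k) i j = X i ((j : Z) + k%:R).
Proof.
rewrite -{2}[X](mulrVK (KmX_unit k)) KmXR addrK.
by [].
Qed.
End S.

Theorem lemma3p3 (K : fieldType) (charK : [pchar K] =i pred0) (n : nat)
  (A B : 'M[K]_(n.+2)) (d : 'Z_(n.+2)) (hd : d \is a GRing.unit)
  (l : 'I_(n.+2)) :
  let Km := circK K n in
  let m : nat := (d^-1 * (l : 'Z_(n.+2)))%R in
  (Km ^+ l * dcomp d A B = dcomp d A (Km ^+ l * B)
   /\ dcomp d A (Km ^+ l * B) = dcomp d (Km ^- m * A) B)
  /\
  (dcomp d A B * Km ^+ l = dcomp d A (B * Km ^+ l)
   /\ dcomp d A (B * Km ^+ l) = dcomp d (A * Km ^- m) B).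
Proof.
move=> Km m.
have hm : (m%:R : 'Z_(n.+2)) = d^-1 * (l : 'Z_(n.+2)) by rewrite natr_Zp.
have hl : (l%:R : 'Z_(n.+2)) = l by rewrite natr_Zp.
have hdm : d * (m%:R : 'Z_(n.+2)) = l by rewrite hm mulVKr.
split; split; apply/matrixP => i j.
- rewrite KmXL !mxE; apply: eq_bigr => s _; apply: eq_bigr => t _.
  by rewrite KmXL addrA.
- rewrite !mxE (reindex_inj (addIr (- (m%:R : 'Z_(n.+2))))) /=.
  apply: eq_bigr => s _; apply: eq_bigr => t _.
  rewrite KmXL KmVL hl; congr (_ * B _ _).
  by rewrite mulrDr mulrN hdm [in LHS]addrAC subrK.
- rewrite KmXR !mxE; apply: eq_bigr => s _; apply: eq_bigr => t _.
  by rewrite KmXR addrA.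
- rewrite !mxE; apply: eq_bigr => s _.
  rewrite (reindex_inj (addIr (m%:R : 'Z_(n.+2)))) /=.
  apply: eq_bigr => t _.
  rewrite KmXR KmVR hl; congr (_ * B _ _).
  by rewrite mulrDr hdm [in LHS]addrAC addrK.
Qed.
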